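(* Backward proof search in $\mathsf{G}(\mathbf{K}_D)$ and in $\mathsf{G}(\mathbf{KD}_D)$ always terminates: for each of these two calculi, there is no infinite sequence of sequents $S_0,S_1,S_2,\dots$ such that, for every $i$, $S_{i+1}$ is a premise of some instance of a rule of the calculus whose conclusion is $S_i$.
   Context: Language: fix a finite nonempty set $\mathsf{Agt}$ of agents and a countable set $\mathsf{Prop}$ of propositional variables; $\mathsf{Grp}$ is the set of nonempty subsets of $\mathsf{Agt}$. Formulas: $\alpha::=p\mid\bot\mid\alpha\wedge\alpha\mid\alpha\vee\alpha\mid\alpha\rightarrow\alpha\mid\neg\alpha\mid D_G\alpha$ ($p\in\mathsf{Prop}$, $G\in\mathsf{Grp}$). Outmost-boxed formula: one of the form $D_G\gamma$. Sequent calculi (sequents $\Gamma\Rightarrow\Delta$ are pairs of finite multisets): $\mathsf{G}(\mathbf{K}_D)$ has initial sequents $\Gamma,p\Rightarrow p,\Delta$ and $\bot,\Gamma\Rightarrow\Delta$; rules $(R\wedge)$ from $\Gamma\Rightarrow\Delta,\alpha_1$ and $\Gamma\Rightarrow\Delta,\alpha_2$ infer $\Gamma\Rightarrow\Delta,\alpha_1\wedge\alpha_2$; $(L\wedge)$ from $\alpha_1,\alpha_2,\Gamma\Rightarrow\Delta$ infer $\alpha_1\wedge\alpha_2,\Gamma\Rightarrow\Delta$; $(R\vee)$ from $\Gamma\Rightarrow\Delta,\alpha_1,\alpha_2$ infer $\Gamma\Rightarrow\Delta,\alpha_1\vee\alpha_2$; $(L\vee)$ from $\alpha_1,\Gamma\Rightarrow\Delta$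 and $\alpha_2,\Gamma\Rightarrow\Delta$ infer $\alpha_1\vee\alpha_2,\Gamma\Rightarrow\Delta$; $(R\rightarrow)$ from $\alpha_1,\Gamma\Rightarrow\Delta,\alpha_2$ infer $\Gamma\Rightarrow\Delta,\alpha_1\rightarrow\alpha_2$; $(L\rightarrow)$ from $\Gamma\Rightarrow\Delta,\alpha_1$ and $\alpha_2,\Gamma\Rightarrow\Delta$ infer $\alpha_1\rightarrow\alpha_2,\Gamma\Rightarrow\Delta$; $(R\neg)$ from $\alpha,\Gamma\Rightarrow\Delta$ infer $\Gamma\Rightarrow\Delta,\neg\alpha$; $(L\neg)$ from $\Gamma\Rightarrow\Delta,\alpha$ infer $\neg\alpha,\Gamma\Rightarrow\Delta$; $(D_K)$: from $\alpha_1,\dots,\alpha_n\Rightarrow\beta$ ($n\ge0$) infer $\Sigma,D_{G_1}\alpha_1,\dots,D_{G_n}\alpha_n\Rightarrow D_G\beta,\Omega$ where all $G_i\subseteq G$, $\Sigma$ consists only of propositional variables, $\bot$, and $D_H\gamma$ with $H\not\subseteq G$, and $\Omega$ only of propositional variables, $\bot$, outmost-boxed formulas. $\mathsf{G}(\mathbf{KD}_D)$ adds $(D_D)$: from $\Gamma\Rightarrow$ with $\Gamma\neq\emptyset$ infer $\Sigma,D_{\{a\}}\Gamma\Rightarrow\Omega$ ($a\in\mathsf{Agt}$, $D_{\{a\}}\Gamma=\{D_{\{a\}}\gamma:\gamma\in\Gamma\}$), $\Sigma$ only propositional variables, $\bot$, $D_H\gamma$ with $H\neq\{a\}$; $\Omega$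 only propositional variables, $\bot$, outmost-boxed formulas. *)

(* Defs.v *)
From mathcomp Require Import all_boot.
From Stdlib Require Import Permutation.
Set Implicit Arguments.
Unset Strict Implicit.
Unset Printing Implicit Defensive.

Section Logic.
Variables (Agt : finType) (PropV : Type).

Definition grp := {G : {set Agt} | G != set0}.

Inductive form : Type :=
| Var of PropV
| Bot
| And of form & form
| Or of form & form
| Imp of form & form
| Neg of form
| Box of grp & form.

(* sequents: pairs of finite multisets, represented by lists up to permutation *)
Definition sequent := (seq form * seq form)%type.

Definition seq_equiv (S T : sequent) : Prop :=
  Permutation S.1 T.1 /\ Permutation S.2 T.2.

Definition sigmaK (G : grp) (f : form) : bool :=
  match f with
  | Var _ | Bot => true
  | Box H _ => ~~ (sval H \subset sval G)
  | _ => false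
  end.

Definition sigmaD (a : Agt) (f : form) : bool :=
  match f with
  | Var _ | Bot => true
  | Box H _ => sval H != [set a]
  | _ => false
  end.

Definition omegaC (f : form) : bool :=
  match f with
  | Var _ | Bot | Box _ _ => true
  | _ => false
  end.

Inductive ruleK : seq sequent -> sequent -> Prop :=
| r_init_var p Γ Δ : ruleK [::] (Var p :: Γ, Var p :: Δ)
| r_init_bot Γ Δ : ruleK [::] (Bot :: Γ, Δ)
| r_Rand a1 a2 Γ Δ :
    ruleK [:: (Γ, Δ ++ [:: a1]); (Γ, Δ ++ [:: a2])] (Γ, Δ ++ [:: And a1 a2])
| r_Land a1 a2 Γ Δ : ruleK [:: (a1 :: a2 :: Γ, Δ)] (And a1 a2 :: Γ, Δ)
| r_Ror a1 a2 Γ Δ : ruleK [:: (Γ, Δ ++ [:: a1; a2])] (Γ, Δ ++ [:: Or a1 a2])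
| r_Lor a1 a2 Γ Δ :
    ruleK [:: (a1 :: Γ, Δ); (a2 :: Γ, Δ)] (Or a1 a2 :: Γ, Δ)
| r_Rimp a1 a2 Γ Δ : ruleK [:: (a1 :: Γ, Δ ++ [:: a2])] (Γ, Δ ++ [:: Imp a1 a2])
| r_Limp a1 a2 Γ Δ :
    ruleK [:: (Γ, Δ ++ [:: a1]); (a2 :: Γ, Δ)] (Imp a1 a2 :: Γ, Δ)
| r_Rneg a Γ Δ : ruleK [:: (a :: Γ, Δ)] (Γ, Δ ++ [:: Neg a])
| r_Lneg a Γ Δ : ruleK [:: (Γ, Δ ++ [:: a])] (Neg a :: Γ, Δ)
| r_DK (boxed : seq (grp * form)) (G : grp) (beta : form) (Σ Ω : seq form) :
    all (fun p : grp * form => sval p.1 \subset sval G) boxed ->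
    all (sigmaK G) Σ -> all omegaC Ω ->
    ruleK [:: (map snd boxed, [:: beta])]
          (Σ ++ map (fun p : grp * form => Box p.1 p.2) boxed, Box G beta :: Ω).

Inductive ruleKD : seq sequent -> sequent -> Prop :=
| r_K prems C : ruleK prems C -> ruleKD prems C
| r_DD (a : Agt) (Ga : grp) (Γ Σ Ω : seq form) :
    sval Ga = [set a] -> Γ <> [::] ->
    all (sigmaD a) Σ -> all omegaC Ω ->
    ruleKD [:: (Γ, [::])] (Σ ++ map (Box Ga) Γ, Ω).

Definition premise_of (rule : seq sequent -> sequent -> Prop)
  (S' S : sequent) : Prop :=
  exists (prems : seq sequent) (C P : sequent),
    rule prems C /\ seq_equiv C S /\ List.In P prems /\ seq_equiv P S'.

Definition terminates (rule : seq sequent -> sequent -> Prop) : Prop :=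
  ~ exists S : nat -> sequent, forall i, premise_of rule (S i.+1) (S i).

End Logic.

(* Main.v *)
Require Import Defs.
From mathcomp Require Import all_boot.
From Stdlib Require Import Permutation Lia.
From mathcomp Require Import zify.

Section W.
Variables (Agt : finType) (PropV : countType).

Fixpoint fsize (f : form Agt PropV) : nat :=
  match f with
  | Var _ | Bot => 1
  | And a b | Or a b | Imp a b => (fsize a + fsize b).+1
  | Neg a | Box _ a => (fsize a).+1
  end.

Definition lw (l : seq (form Agt PropV)) := sumn (map fsize l).
Definition sw (S : sequent Agt PropV) := lw S.1 + lw S.2.

Lemma lw_cat l1 l2 : lw (l1 ++ l2) = lw l1 + lw l2.
Proof. by rewrite /lw map_cat sumn_cat. Qed.

Lemma lw_cons a l : lw (a :: l) = fsize a + lw l.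
Proof. by []. Qed.

Lemma lw_perm l1 l2 : Permutation l1 l2 -> lw l1 = lw l2.
Proof.
elim => //= [x l l' _ IH|x y l|l l' l'' _ IH1 _ IH2].
- by rewrite !lw_cons IH.
- rewrite !lw_cons; lia.
- by rewrite IH1 IH2.
Qed.

Lemma sw_equiv S T : seq_equiv S T -> sw S = sw T.
Proof. by case=> [H1 H2]; rewrite /sw (@lw_perm _ _ H1) (@lw_perm _ _ H2). Qed.

Lemma lw_box (boxed : seq (grp Agt * form Agt PropV)) :
  lw (map snd boxed) <= lw (map (fun p : grp Agt * form Agt PropV => Box p.1 p.2) boxed).
Proof.
elim: boxed => //= p l IH; rewrite !lw_cons /=; lia.
Qed.

Lemma lw_boxG (Ga : grp Agt) l : l <> [::] -> lw l < lw (map (Box Ga) l).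
Proof.
case: l => // a l _; rewrite /= !lw_cons /=.
suff : lw l <= lw (map (Box Ga) l) by lia.
elim: l => //= b l IH; rewrite !lw_cons /=; lia.
Qed.

Lemma ruleK_dec prems C P : ruleK prems C -> List.In P prems -> sw P < sw C.
Proof.
case=> /=.
all: try (intros; contradiction).
all: intros; repeat match goal with H : _ \/ _ |- _ => destruct H end; try contradiction; subst.
all: rewrite /sw /= ?lw_cat ?lw_cons /= ?lw_cat ?lw_cons /=; try lia.
all: have E0 : lw ([::] : seq (form Agt PropV)) = 0 by [].
all: rewrite ?E0; try lia.
have := lw_box boxed; lia.
Qed.

Lemma ruleKD_dec prems C P : ruleKD prems C -> List.In P prems -> sw P < sw C.
Proof.
case=> [prems' C' H|a Ga Γ Σ Ω _ Hne _ _]; first exact: ruleK_dec.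
case=> // <-; rewrite /sw /= lw_cat.
have := @lw_boxG Ga _ Hne; rewrite /lw /=; lia.
Qed.

Lemma term_gen (rule : seq (sequent Agt PropV) -> sequent Agt PropV -> Prop) :
  (forall prems C P, rule prems C -> List.In P prems -> sw P < sw C) ->
  terminates rule.
Proof.
move=> Hd [S HS].
have step i : sw (S i.+1) < sw (S i).
  case: (HS i) => prems [C [P [Hr [HC [HP HPe]]]]].
  rewrite -(@sw_equiv _ _ HC) -(@sw_equiv _ _ HPe); exact: Hd Hr HP.
have : forall n, sw (S n) + n <= sw (S 0).
  elim => [|n IH]; first by rewrite addn0.
  have := step n; lia.
move/(_ (sw (S 0)).+1); lia.
Qed.

End W.

Theorem proposition3p5 (Agt : finType) (PropV : countType) :
  0 < #|Agt| ->
  terminates (@ruleK Agt PropV) /\ terminates (@ruleKD Agt PropV).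
Proof.
move=> _; split; apply: term_gen; [exact: ruleK_dec | exact: ruleKD_dec].
Qed.
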